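(* Fix $b\in\{0,1\}$ with $0<\mathbb{P}(g=1\mid y=b)<1$, and suppose $\theta\mapsto\mathbb{P}(g=1\mid x=\theta,y=b)$ on $[0,1]$ has a single crossing with the constant $\mathbb{P}(g=1\mid y=b)$, with crossing point $\theta_U$. Let $D_b(\theta)=\mathbb{P}(x\ge\theta\mid g=1,y=b)-\mathbb{P}(x\ge\theta\mid g=0,y=b)$. Then $D_b$ is nondecreasing on $[0,\theta_U]$, nonincreasing on $[\theta_U,1]$ and nonnegative on $[0,1]$. Consequently the TPR-unfairness (case $b=1$), respectively FPR-unfairness (case $b=0$), $U(\theta)=|D_b(\theta)|=D_b(\theta)$ is positively unimodal with global maximum at $\theta_U$.
   Context: $(g,x,y)$ is a random triple with group $g\in\{0,1\}$, label $y\in\{0,1\}$ and real feature $x\in[0,1]$; $x$ has a density $h_x$ strictly positive on $[0,1]$, all conditional densities of $x$ given $g$, $y$, or $(g,y)$ exist and are strictly positive on $[0,1]$, and the conditional probabilities $\theta\mapsto\mathbb{P}(y=1\mid x=\theta)$, $\mathbb{P}(g=1\mid x=\theta)$, $\mathbb{P}(g=1\mid x=\theta,y=b)$ are continuous in $\theta$; $0<\mathbb{P}(g=1)<1$ and $0<\mathbb{P}(y=1)<1$. A threshold classifier is $f_\theta(x)=\mathbb{I}[x\ge\theta]$. $\mathrm{TPR}(\theta\mid g)=\mathbb{P}(x\ge\theta\mid g,y=1)$, $\mathrm{FPR}(\theta\mid g)=\mathbb{P}(x\ge\theta\mid g,y=0)$, and $U_{\mathcal M}(\theta)=|\mathcal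 M(\theta\mid g=1)-\mathcal M(\theta\mid g=0)|$ for $\mathcal M\in\{\mathrm{TPR},\mathrm{FPR}\}$. A function $q$ on $[0,1]$ has a single crossing with a constant $v$ if there is $z\in[0,1]$ with $q(t)\le v$ for $t\le z$ and $q(t)\ge v$ for $t\ge z$ ($z$ is a crossing point). *)

(* Defs.v *)
From HB Require Import structures.
From mathcomp Require Import all_boot all_order all_algebra.
From mathcomp Require Import all_classical all_reals all_analysis.
Set Implicit Arguments. Unset Strict Implicit. Unset Printing Implicit Defensive.
Import Order.TTheory GRing.Theory Num.Theory.
Import numFieldNormedType.Exports.
Local Open Scope classical_set_scope.
Local Open Scope ring_scope.

(* Model of the random triple (g,x,y): [p g y] is the joint density of x
   restricted to the event {g, y}, i.e.
     P(g = a, y = c, x \in A) = \int_A p a c   for measurable A ⊆ [0,1].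
   Booleans encode {0,1}: true = 1, false = 0. *)
Section Model.
Variable R : realType.
Notation mu := (@lebesgue_measure R).
Variable p : bool -> bool -> R -> R.

Definition Pgy (a c : bool) : R := Rintegral mu `[0, 1] (p a c).
Definition Py (c : bool) : R := Pgy false c + Pgy true c.
Definition Pg (a : bool) : R := Pgy a false + Pgy a true.
Definition Pg1_y (c : bool) : R := Pgy true c / Py c.

Definition hx (t : R) : R := p false false t + p false true t + p true false t + p true true t.
Definition Py1_x (t : R) : R := (p false true t + p true true t) / hx t.
Definition Pg1_x (t : R) : R := (p true false t + p true true t) / hx t.
Definition Pg1_xy (c : bool) (t : R) : R := p true c t / (p false c t + p true c t).

Definition Pxge (a c : bool) (t : R) : R := Rintegral mu `[t, 1] (p a c) / Pgy a c.

Definition TPR (a : bool) (t : R) : R := Pxge a true t.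
Definition FPR (a : bool) (t : R) : R := Pxge a false t.
Definition Unfair (M : bool -> R -> R) (t : R) : R := `|M true t - M false t|.

Definition Dgap (c : bool) (t : R) : R := Pxge true c t - Pxge false c t.
End Model.

Definition admissible_model (R : realType) (p : bool -> bool -> R -> R) : Prop :=
  [/\ (forall a c : bool, measurable_fun `[(0:R), 1] (p a c) /\
                   (@lebesgue_measure R).-integrable `[0, 1] (EFin \o p a c)),
      (forall (a c : bool) (t : R), t \in `[0, 1] -> 0 < p a c t),
      Pgy p false false + Pgy p false true + Pgy p true false + Pgy p true true = 1,
      [/\ {within `[(0:R), 1], continuous (Py1_x p)},
          {within `[(0:R), 1], continuous (Pg1_x p)} &
          (forall c, {within `[(0:R), 1], continuous (Pg1_xy p c)})] &
      (0 < Pg p true < 1) /\ (0 < Py p true < 1)].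

Definition crossing_point (R : realType) (q : R -> R) (v z : R) : Prop :=
  z \in `[(0:R), 1] /\
  forall t, t \in `[0, 1] -> (t <= z -> q t <= v) /\ (z <= t -> v <= q t).

(* Main.v *)
Require Import Defs.
From HB Require Import structures.
From mathcomp Require Import all_boot all_order all_algebra.
From mathcomp Require Import all_classical all_reals all_analysis.
From mathcomp Require Import lra.
Import Order.TTheory GRing.Theory Num.Theory.
Local Open Scope classical_set_scope.
Local Open Scope ring_scope.

Section H.
Variable R : realType.
Notation mu := (@lebesgue_measure R).

Lemma split_int (f : R -> R) (s t : R) : 0 <= s -> s <= t -> t <= 1 ->
  mu.-integrable `[0, 1] (EFin \o f) ->
  Rintegral mu `[s, 1] f = Rintegral mu `[s, t[ f + Rintegral mu `[t, 1] f.
Proof.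
move=> s0 st t1 If.
rewrite (@itv_bndbnd_setU _ _ _ (BLeft t)); [|by rewrite bnd_simp|by rewrite bnd_simp].
rewrite Rintegral_setU //.
- apply: integrableS If => //; first exact: measurableU.
  rewrite -itv_bndbnd_setU ?bnd_simp //.
  by apply: subset_itvr; rewrite bnd_simp.
- apply/disj_setPS => x /= [].
  rewrite !in_itv /= => /andP[_ xt] /andP[tx _].
  by move: (lt_le_trans xt tx); rewrite ltxx.
Qed.

Lemma int_comb (f1 f2 : R -> R) (c1 c2 : R) (i : interval R) :
  mu.-integrable [set` i] (EFin \o f1) -> mu.-integrable [set` i] (EFin \o f2) ->
  Rintegral mu [set` i] (fun x => f1 x / c1 - f2 x / c2) =
  Rintegral mu [set` i] f1 / c1 - Rintegral mu [set` i] f2 / c2.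
Proof.
move=> I1 I2.
rewrite RintegralB //.
- by rewrite RintegralZr // RintegralZr.
- exact: (integrableZr _ c1^-1 I1).
- exact: (integrableZr _ c2^-1 I2).
Qed.
End H.

Lemma alg_le (R : realFieldType) (a0 a1 q0 q1 : R) : 0 < a0 -> 0 < a1 -> 0 < q0 -> 0 < q1 ->
  a1 / (a0 + a1) <= q1 / (q0 + q1) -> a1 / q1 - a0 / q0 <= 0.
Proof.
move=> ha0 ha1 hq0 hq1.
rewrite subr_le0 ler_pdivrMr ?addr_gt0 // mulrAC ler_pdivlMr ?addr_gt0 //.
rewrite ler_pdivrMr // mulrAC ler_pdivlMr //.
nra.
Qed.
Lemma alg_ge (R : realFieldType) (a0 a1 q0 q1 : R) : 0 < a0 -> 0 < a1 -> 0 < q0 -> 0 < q1 ->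
  q1 / (q0 + q1) <= a1 / (a0 + a1) -> 0 <= a1 / q1 - a0 / q0.
Proof.
move=> ha0 ha1 hq0 hq1.
rewrite subr_ge0 ler_pdivrMr ?addr_gt0 // mulrAC ler_pdivlMr ?addr_gt0 //.
rewrite ler_pdivrMr // mulrAC ler_pdivlMr //.
nra.
Qed.

Theorem mainTheorem4 (R : realType) (p : bool -> bool -> R -> R) (b : bool)
  (thetaU : R) :
  admissible_model p ->
  0 < Pg1_y p b < 1 ->
  crossing_point (Pg1_xy p b) (Pg1_y p b) thetaU ->
  let D := Dgap p b in
  let U := Unfair (if b then TPR p else FPR p) in
  [/\ (forall s t, 0 <= s -> s <= t -> t <= thetaU -> D s <= D t),
      (forall s t, thetaU <= s -> s <= t -> t <= 1 -> D t <= D s),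
      (forall t, 0 <= t -> t <= 1 -> 0 <= D t),
      (forall t, 0 <= t -> t <= 1 -> U t = D t) &
      (forall t, 0 <= t -> t <= 1 -> U t <= U thetaU)].
Proof.
move=> [Hm Hpos Hsum Hcont Hprob] Hy [Hth Hcross] D U.
have [Im1 I1] := Hm true b.
have [Im0 I0] := Hm false b.
set f1 := p true b in I1 *.
set f0 := p false b in I0 *.
set P1 := Pgy p true b.
set P0 := Pgy p false b.
have P1ge : 0 <= P1 by apply: Rintegral_ge0 => x Hx; apply/ltW/Hpos.
have P0ge : 0 <= P0 by apply: Rintegral_ge0 => x Hx; apply/ltW/Hpos.
have PyE : Pg1_y p b = P1 / (P0 + P1) by [].
move: Hy; rewrite PyE => /andP[Hy0 Hy1].
have P1gt : 0 < P1.
  rewrite lt_neqAle P1ge andbT; apply/eqP => E.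
  by move: Hy0; rewrite -E mul0r ltxx.
have P0gt : 0 < P0.
  move: Hy1; rewrite ltr_pdivrMr ?ltr_wpDl // mul1r ltrDr.
  by [].
move: Hth; rewrite in_itv /= => /andP[th0 th1].
pose g x := f1 x / P1 - f0 x / P0.
have gle : forall x, 0 <= x -> x <= thetaU -> g x <= 0.
  move=> x x0 xth.
  have xI : x \in `[(0:R), 1] by rewrite in_itv /= x0 (le_trans xth th1).
  have [H _] := Hcross x xI.
  apply: alg_le; try exact: Hpos.
  - by [].
  - by [].
  - by rewrite -PyE; apply: H.
have gge : forall x, thetaU <= x -> x <= 1 -> 0 <= g x.
  move=> x thx x1.
  have xI : x \in `[(0:R), 1] by rewrite in_itv /= x1 (le_trans th0 thx).
  have [_ H] := Hcross x xI.
  apply: alg_ge; try exact: Hpos.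
  - by [].
  - by [].
  - by rewrite -PyE; apply: H.
have intS : forall (f : R -> R) (i : interval R), [set` i] `<=` `[(0:R), 1]%classic ->
    (@lebesgue_measure R).-integrable `[0, 1] (EFin \o f) ->
    (@lebesgue_measure R).-integrable [set` i] (EFin \o f).
  by move=> f i sub If; apply: integrableS If.
have diff : forall s t, 0 <= s -> s <= t -> t <= 1 ->
    D s - D t = Rintegral (@lebesgue_measure R) `[s, t[ g.
  move=> s t s0 st t1.
  have sub : [set` `[s, t[] `<=` `[(0:R), 1]%classic.
    move=> x /=; rewrite !in_itv /= => /andP[sx xt].
    by rewrite (le_trans s0 sx) (le_trans (ltW xt) t1).
  rewrite /D /Dgap /Pxge -/P1 -/P0 -/f1 -/f0.
  rewrite (@split_int R f1 s t s0 st t1 I1) (@split_int R f0 s t s0 st t1 I0) /g int_comb; try exact: intS.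
  rewrite !mulrDl; lra.
have D1 : D 1 = 0.
  by rewrite /D /Dgap /Pxge set_itv1 !Rintegral_set1 !mul0r subrr.
have D0 : D 0 = 0.
  by rewrite /D /Dgap /Pxge -/P1 -/P0 !divff ?subrr // gt_eqF.
have part1 : forall s t, 0 <= s -> s <= t -> t <= thetaU -> D s <= D t.
  move=> s t s0 st tth.
  rewrite -subr_le0 diff // ?(le_trans tth th1) //.
  rewrite -[X in X <= _]opprK oppr_le0.
  have -> : - Rintegral (@lebesgue_measure R) `[s, t[ g =
      Rintegral (@lebesgue_measure R) `[s, t[ (fun x => f0 x / P0 - f1 x / P1).
    have sub : [set` `[s, t[] `<=` `[(0:R), 1]%classic.
      move=> x /=; rewrite !in_itv /= => /andP[sx xt].
      by rewrite (le_trans s0 sx) (le_trans (ltW xt) (le_trans tth th1)).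
    rewrite /g !int_comb; try exact: intS.
    lra.
  apply: Rintegral_ge0 => x /=; rewrite in_itv /= => /andP[sx xt].
  rewrite -oppr_le0 opprB; apply: gle.
  - exact: le_trans s0 sx.
  - exact: le_trans (ltW xt) tth.
have part2 : forall s t, thetaU <= s -> s <= t -> t <= 1 -> D t <= D s.
  move=> s t ths st t1.
  rewrite -subr_ge0 diff // ?(le_trans th0 ths) //.
  apply: Rintegral_ge0 => x /=; rewrite in_itv /= => /andP[sx xt].
  apply: gge.
  - exact: le_trans ths sx.
  - exact: le_trans (ltW xt) t1.
have nonneg : forall t, 0 <= t -> t <= 1 -> 0 <= D t.
  move=> t t0 t1.
  have [tth|tht] := leP t thetaU.
    by rewrite -D0; apply: part1.
  by rewrite -D1; apply: (part2 t 1) => //; apply: ltW.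
have UD : forall t, 0 <= t -> t <= 1 -> U t = D t.
  move=> t t0 t1; rewrite -[RHS]ger0_norm ?nonneg //.
  by rewrite /U /D /Unfair /Dgap; case: (b).
split => //.
move=> t t0 t1; rewrite !UD //.
have [tth|tht] := leP t thetaU.
  exact: part1.
by apply: (part2 thetaU) => //; apply: ltW.
Qed.
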